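(* Let $n\ge1$; for $i\in[n]$ let $d_i\ge1$, $p_{i0}<\cdots<p_{id_i}$ reals, $\mathcal{X}=\prod_i\{p_{i0},\dots,p_{id_i}\}$, $f_i:\{p_{i0},\dots,p_{id_i}\}\to[L_i,U_i]$, $g_i:\{p_{i0},\dots,p_{id_i}\}\to[L'_i,U'_i]$. Let $\phi:\prod_i[L_i,U_i]\to\mathbb{R}$ be submodular and $\varphi:\prod_i[L'_i,U'_i]\to\mathbb{R}$ supermodular, with $\phi(f_1(x_1),\dots,f_n(x_n))\ge0$ and $\varphi(g_1(x_1),\dots,g_n(x_n))>0$ for all $\boldsymbol{x}\in\mathcal{X}$. Let $\sigma=(\sigma_1,\dots,\sigma_n)$, each $\sigma_i$ a permutation of $\{0,\dots,d_i\}$, satisfy $f_i(p_{i,\sigma_i(0)})\le\cdots\le f_i(p_{i,\sigma_i(d_i)})$ and $g_i(p_{i,\sigma_i(0)})\le\cdots\le g_i(p_{i,\sigma_i(d_i)})$ for all $i$. For $\boldsymbol{j}\in\mathcal{G}=\prod_i\{0,\dots,d_i\}$ let $\psi^\sigma(\boldsymbol{j})=\phi(f_1(p_{1,\sigma_1(j_1)}),\dots,f_n(p_{n,\sigma_n(j_n)}))$ and $\theta^\sigma(\boldsymbol{j})=\varphi(g_1(p_{1,\sigma_1(j_1)}),\dots,g_n(p_{n,\sigma_n(j_n)}))$, and write $(L^{\sigma_i})^{-1}(\boldsymbol{z}_i)=A^{\sigma_i}\boldsymbol{z}_i+\boldsymbol{c}^{\sigma_i}$. Then $$\min_{\boldsymbol{x}\in\mathcal{X}}\frac{\phi(f_1(x_1),\dots,f_n(x_n))}{\varphi(g_1(x_1),\dots,g_n(x_n))}$$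 equals the optimal value of the linear program: minimize $\mu$ subject to, for every $\pi\in\Pi$ with point representation $\boldsymbol{j}^0,\dots,\boldsymbol{j}^N$, $$\mu\ge\psi^\sigma(\boldsymbol{j}^0)\rho+\sum_{t\in[N]}(\psi^\sigma(\boldsymbol{j}^t)-\psi^\sigma(\boldsymbol{j}^{t-1}))s'_{\pi_t},\qquad 1\le\theta^\sigma(\boldsymbol{j}^0)\rho+\sum_{t\in[N]}(\theta^\sigma(\boldsymbol{j}^t)-\theta^\sigma(\boldsymbol{j}^{t-1}))s'_{\pi_t},$$ and $\rho\ge s_{i1}\ge\cdots\ge s_{id_i}\ge0$, $\boldsymbol{s}'_i=A^{\sigma_i}\boldsymbol{s}_i+\boldsymbol{c}^{\sigma_i}\rho$ for all $i\in[n]$.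
   Context: $N=\sum_i d_i$. Sub/supermodularity on a box is with respect to componentwise max and min. Staircase: $\pi=(\pi_1,\dots,\pi_N)$, $\pi_t=(\pi_t(1),\pi_t(2))$, $\pi_t(1)\in[n]$ occurring exactly $d_i$ times for each $i$, $\pi_t(2)=|\{s\le t:\pi_s(1)=\pi_t(1)\}|$; $\Pi$ the set of staircases; $s'_{\pi_t}=s'_{\pi_t(1),\pi_t(2)}$; $\boldsymbol{j}^0=\boldsymbol{0}$, $\boldsymbol{j}^t=\boldsymbol{j}^{t-1}+\boldsymbol{e}_{\pi_t(1)}$. For each $i$: $T_i:\mathbb{R}^{d_i}\to\mathbb{R}^{d_i+1}$, $\lambda_{ij}=z_{ij}-z_{i,j+1}$ ($j=0,\dots,d_i$, $z_{i0}=1$, $z_{i,d_i+1}=0$), $T_i^{-1}:z_{ij}=\sum_{k=j}^{d_i}\lambda_{ik}$; $P^{\sigma_i}$ the permutation matrix with $(j,k)$ entry $1$ iff $j=\sigma_i(k)$; $L^{\sigma_i}=T_i^{-1}\circ P^{\sigma_i}\circ T_i$, an invertible affine map of $\mathbb{R}^{d_i}$. *)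

(* Defs.v *)
From HB Require Import structures.
From mathcomp Require Import all_boot all_order all_algebra all_fingroup.
From mathcomp Require Import reals.
Set Implicit Arguments.
Unset Strict Implicit.
Unset Printing Implicit Defensive.
Import Order.TTheory GRing.Theory Num.Theory.
Local Open Scope ring_scope.

Section Defs.
Variable R : realType.

Definition in_box n (lo hi : 'I_n -> R) (x : 'I_n -> R) :=
  forall i, lo i <= x i <= hi i.

Definition submodular_on n (lo hi : 'I_n -> R) (phi : ('I_n -> R) -> R) :=
  forall x y, in_box lo hi x -> in_box lo hi y ->
    phi (fun i => Num.max (x i) (y i)) + phi (fun i => Num.min (x i) (y i))
      <= phi x + phi y.

Definition supermodular_on n (lo hi : 'I_n -> R) (phi : ('I_n -> R) -> R) :=
  forall x y, in_box lo hi x -> in_box lo hi y ->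
    phi x + phi y <=
    phi (fun i => Num.max (x i) (y i)) + phi (fun i => Num.min (x i) (y i)).

Definition in_X n (d : 'I_n -> nat) (p : forall i, 'I_(d i).+1 -> R)
  (x : 'I_n -> R) := forall i, exists j : 'I_(d i).+1, x i = p i j.

(* 0-based nat access to a column vector (0 outside the range) *)
Definition vnat m (v : 'cV[R]_m) (k : nat) : R :=
  match (insub k : option 'I_m) with Some o => v o 0 | None => 0 end.

(* z in R^d holds z_1..z_d as v 0 .. v (d-1);  zext gives z_0 = 1, z_{d+1} = 0 *)
Definition zext d (z : 'cV[R]_d) (k : nat) : R :=
  if k == 0%N then 1 else if (k <= d)%N then vnat z k.-1 else 0.

Definition Tmap d (z : 'cV[R]_d) : 'cV[R]_(d.+1) :=
  \col_(j < d.+1) (zext z j - zext z j.+1).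

(* T^{-1} : z_j = sum_{k=j}^{d} lambda_k, j = 1..d (stored at index j-1) *)
Definition Tinv d (lam : 'cV[R]_(d.+1)) : 'cV[R]_d :=
  \col_(m < d) \sum_(k < d.+1 | (m.+1 <= k)%N) lam k 0.

Definition Pmat d (s : {perm 'I_d.+1}) : 'M[R]_(d.+1) :=
  \matrix_(j, k) ((j == s k)%:R).

Definition Lmap d (s : {perm 'I_d.+1}) (z : 'cV[R]_d) : 'cV[R]_d :=
  Tinv (Pmat s *m Tmap z).

Definition grid_val n (d : 'I_n -> nat) (p : forall i, 'I_(d i).+1 -> R)
  (s : forall i, {perm 'I_(d i).+1}) (h : 'I_n -> R -> R)
  (F : ('I_n -> R) -> R) (j : 'I_n -> nat) : R :=
  F (fun i => h i (p i (s i (inord (j i))))).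

(* staircases: sequences of pi_t(1) in which each i occurs exactly d_i times *)
Definition is_staircase n (d : 'I_n -> nat) (pi : seq 'I_n) :=
  forall i, count_mem i pi = d i.

(* sum_{t} (Psi(j^t) - Psi(j^{t-1})) s'_{pi_t}, with j^t = j^{t-1} + e_{pi_t(1)}
   and pi_t(2) = j^t_{pi_t(1)} *)
Fixpoint stair_sum n (Psi : ('I_n -> nat) -> R) (sp : 'I_n -> nat -> R)
  (prev : 'I_n -> nat) (pi : seq 'I_n) : R :=
  match pi with
  | [::] => 0
  | i :: pi' =>
      let next := fun k => (prev k + (k == i))%N in
      (Psi next - Psi prev) * sp i (next i) + stair_sum Psi sp next pi'
  end.

Definition stair_val n (Psi : ('I_n -> nat) -> R) (sp : 'I_n -> nat -> R)
  (rho : R) (pi : seq 'I_n) : R :=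
  Psi (fun _ => 0%N) * rho + stair_sum Psi sp (fun _ => 0%N) pi.

Definition sprime n (d : 'I_n -> nat) (A : forall i, 'M[R]_(d i))
  (c : forall i, 'cV[R]_(d i)) (rho : R) (s : forall i, 'cV[R]_(d i))
  (i : 'I_n) : 'cV[R]_(d i) := A i *m s i + rho *: c i.

(* feasibility of (mu, rho, s) in the LP; s_{i,k} (k = 1..d_i) is vnat (s i) (k-1) *)
Definition lp_feasible n (d : 'I_n -> nat) (Psi Theta : ('I_n -> nat) -> R)
  (A : forall i, 'M[R]_(d i)) (c : forall i, 'cV[R]_(d i))
  (mu rho : R) (s : forall i, 'cV[R]_(d i)) : Prop :=
  let sp := fun i k => vnat (sprime A c rho s i) k.-1 in
  [/\ (forall pi, is_staircase d pi ->
         stair_val Psi sp rho pi <= mu /\ 1 <= stair_val Theta sp rho pi),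
      (forall i, vnat (s i) 0 <= rho),
      (forall i k, (k.+1 < d i)%N -> vnat (s i) k.+1 <= vnat (s i) k) &
      (forall i, 0 <= vnat (s i) (d i).-1)].

Definition lp_optimal_value n (d : 'I_n -> nat) (Psi Theta : ('I_n -> nat) -> R)
  (A : forall i, 'M[R]_(d i)) (c : forall i, 'cV[R]_(d i)) (m : R) : Prop :=
  (exists rho s, @lp_feasible n d Psi Theta A c m rho s) /\
  (forall mu rho s, @lp_feasible n d Psi Theta A c mu rho s -> m <= mu).

End Defs.
Arguments lp_optimal_value {R n} d Psi Theta A c m.
Arguments lp_feasible {R n} d Psi Theta A c mu rho s.
Arguments Lmap {R d} s z.

(* Main.v *)
Require Import Defs.
From HB Require Import structures.
From mathcomp Require Import all_boot all_order all_algebra all_fingroup.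
From mathcomp Require Import reals boolp.
From mathcomp Require Import ring lra zify.
Import Order.TTheory GRing.Theory Num.Theory.
Set Implicit Arguments.
Unset Strict Implicit.
Unset Printing Implicit Defensive.
Local Open Scope ring_scope.

Definition zh (R : realType) d (r : R) (w : 'cV[R]_d) (k : nat) : R :=
  if k == 0%N then r else if (k <= d)%N then vnat w k.-1 else 0.

Lemma vnatE (R : realType) d (w : 'cV[R]_d) m (Hm : (m < d)%N) :
  vnat w m = w (Ordinal Hm) 0.
Proof. by rewrite /vnat insubT. Qed.

Lemma vnat_out (R : realType) d (w : 'cV[R]_d) m : (d <= m)%N -> vnat w m = 0.
Proof. by move=> H; rewrite /vnat insubF // ltnNge H. Qed.

Lemma zext_big (R : realType) d (w : 'cV[R]_d) : zext w d.+1 = 0.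
Proof. by rewrite /zext /= ltnn. Qed.

Lemma Tmap_entry (R : realType) d (w : 'cV[R]_d) j : Tmap w j 0 = zext w j - zext w j.+1.
Proof. by rewrite mxE. Qed.

Lemma Pmat_mul (R : realType) d (s : {perm 'I_d.+1}) (lam : 'cV[R]_(d.+1)) j :
  (Pmat R s *m lam) j 0 = lam ((s^-1)%g j) 0.
Proof.
rewrite mxE (bigD1 ((s^-1)%g j)) //= mxE permKV eqxx mul1r big1 ?addr0 // => k nk.
rewrite mxE; have -> : (j == s k) = false.
  by apply/negbTE; apply: contra nk => /eqP ->; rewrite permK.
by rewrite mul0r.
Qed.

Lemma sum_Tmap (R : realType) d (w : 'cV[R]_d) : \sum_(j < d.+1) Tmap w j 0 = 1.
Proof.
under eq_bigr do rewrite mxE.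
rewrite -(big_mkord xpredT (fun j => zext w j - zext w j.+1)).
have := telescope_sumr (zext w) (leq0n d.+1).
rewrite zext_big /= => H.
transitivity (- \sum_(0 <= k < d.+1) (zext w k.+1 - zext w k)).
  by rewrite -sumrN; apply: eq_bigr => k _; rewrite opprB.
by rewrite H sub0r opprK.
Qed.

Lemma Lmap_zext (R : realType) d (s : {perm 'I_d.+1}) (w : 'cV[R]_d) k :
  (k <= d.+1)%N ->
  zext (Lmap s w) k = \sum_(j < d.+1 | (k <= j)%N) (Pmat R s *m Tmap w) j 0.
Proof.
move=> Hk.
case: k Hk => [|k] Hk.
  rewrite /zext /= (eq_bigl xpredT) //.
  under eq_bigr do rewrite Pmat_mul.
  rewrite (reindex_inj (@perm_inj _ s)) /=.
  under eq_bigr do rewrite permK.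
  by rewrite sum_Tmap.
case: (ltnP k d) => Hkd.
  rewrite /zext /= Hkd (vnatE _ Hkd) /Lmap /Tinv mxE /=.
  by apply: eq_bigr.
have -> : k = d by apply/eqP; rewrite eqn_leq Hkd -ltnS Hk.
rewrite zext_big big_pred0 // => j.
by rewrite ltnNge -ltnS ltn_ord.
Qed.

Lemma T_Lmap (R : realType) d (s : {perm 'I_d.+1}) (w : 'cV[R]_d) (j : 'I_d.+1) :
  Tmap (Lmap s w) j 0 = (Pmat R s *m Tmap w) j 0.
Proof.
rewrite Tmap_entry !Lmap_zext ?(ltnW (ltn_ord j)) ?ltn_ord //.
rewrite (bigD1 j) ?leqnn //=.
rewrite (eq_bigl (fun i : 'I_d.+1 => (j < i)%N)) ?addrK //.
by move=> i /=; rewrite ltn_neqAle andbC eq_sym.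
Qed.

Lemma Tmap_entry' (R : realType) d (w : 'cV[R]_d) k (H : (k < d.+1)%N) :
  Tmap w (Ordinal H) 0 = zext w k - zext w k.+1.
Proof. by rewrite mxE. Qed.

Lemma Tmap_inj (R : realType) d (w1 w2 : 'cV[R]_d) :
  (forall j : 'I_d.+1, Tmap w1 j 0 = Tmap w2 j 0) -> w1 = w2.
Proof.
move=> H.
have Z : forall k, (k <= d.+1)%N -> zext w1 k = zext w2 k.
  elim=> [|k IH] Hk; first by [].
  have Hk' : (k < d.+1)%N by [].
  have Hk2 : (k <= d.+1)%N by apply: ltnW.
  have := H (Ordinal Hk'); rewrite !Tmap_entry' (IH Hk2) => E.
  by apply: oppr_inj; apply: (addrI (zext w2 k)); exact: E.
apply/matrixP => i j; rewrite (ord1 j).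
have := Z i.+1 (ltnW (ltn_ord i)).
rewrite /zext /= (ltn_ord i) !(vnatE _ (ltn_ord i)) /=.
by have -> : Ordinal (ltn_ord i) = i by apply: val_inj.
Qed.

Lemma Lmap_inj (R : realType) d (s : {perm 'I_d.+1}) : injective (@Lmap R d s).
Proof.
move=> w1 w2 E; apply: Tmap_inj => j.
have := T_Lmap s w1 (s j); rewrite E T_Lmap !Pmat_mul permK => ->.
by [].
Qed.

Definition simp (R : realType) d (w : 'cV[R]_d) := forall j : 'I_d.+1, 0 <= Tmap w j 0.

Lemma Lmap_simp (R : realType) d (s : {perm 'I_d.+1}) (w : 'cV[R]_d) :
  simp (Lmap s w) <-> simp w.
Proof.
split => H j.
  by have := H (s j); rewrite T_Lmap Pmat_mul permK.
by rewrite T_Lmap Pmat_mul; exact: H.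
Qed.

Definition hsimp (R : realType) d (r : R) (w : 'cV[R]_d) :=
  forall k, zh r w k.+1 <= zh r w k.

Lemma zh_big (R : realType) d (r : R) (w : 'cV[R]_d) k : (d < k)%N -> zh r w k = 0.
Proof.
move=> H; rewrite /zh; case: eqP => [E|_]; first by rewrite E in H.
by rewrite leqNgt H.
Qed.

Lemma simp_hsimp (R : realType) d (w : 'cV[R]_d) : simp w <-> hsimp 1 w.
Proof.
split=> H k.
  case: (ltnP k d.+1) => Hk.
    by have := H (Ordinal Hk); rewrite Tmap_entry' subr_ge0.
  by rewrite !zh_big // ltnW.
by rewrite Tmap_entry subr_ge0; exact: H.
Qed.

Lemma vnatZ (R : realType) d (a : R) (w : 'cV[R]_d) m : vnat (a *: w) m = a * vnat w m.
Proof.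
rewrite /vnat; case: insubP => [o _ _|_]; first by rewrite mxE.
by rewrite mulr0.
Qed.

Lemma zhZ (R : realType) d (a r : R) (w : 'cV[R]_d) k : zh (a * r) (a *: w) k = a * zh r w k.
Proof.
rewrite /zh; case: eqP => // _; case: leqP => _; by rewrite ?vnatZ ?mulr0.
Qed.

Lemma hsimpZ (R : realType) d (a r : R) (w : 'cV[R]_d) :
  0 < a -> hsimp r w -> hsimp (a * r) (a *: w).
Proof. by move=> Ha H k; rewrite !zhZ ler_pM2l. Qed.

Lemma noninc (R : realType) (f : nat -> R) : (forall k, f k.+1 <= f k) ->
  forall k m, (k <= m)%N -> f m <= f k.
Proof.
move=> H k; elim=> [|m IH] Hkm.
  by rewrite leqn0 in Hkm; rewrite (eqP Hkm).
case: (ltnP k m.+1) => Hk.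
  exact: le_trans (H m) (IH Hk).
by have -> : k = m.+1 by apply/eqP; rewrite eqn_leq Hkm Hk.
Qed.

Lemma hsimp_bounds (R : realType) d (r : R) (w : 'cV[R]_d) :
  hsimp r w -> forall k, 0 <= zh r w k /\ zh r w k <= r.
Proof.
move=> H k.
have N := noninc H.
have Z : zh r w d.+1 = 0 by rewrite zh_big.
have r0 : 0 <= r by rewrite -Z; exact: (N 0%N d.+1).
case: (leqP k d.+1) => Hk.
  split; first by rewrite -Z; exact: N.
  exact: (N 0%N k).
by rewrite zh_big ?(ltnW Hk) //; split.
Qed.

Lemma lp_hsimp (R : realType) d (r : R) (s : 'cV[R]_d) : (0 < d)%N ->
  (vnat s 0 <= r /\ (forall k, (k.+1 < d)%N -> vnat s k.+1 <= vnat s k)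
     /\ 0 <= vnat s d.-1) <-> hsimp r s.
Proof.
move=> d0; split.
  move=> [H1 [H2 H3]] [|k].
    by rewrite /zh /= d0.
  case: (ltnP k.+1 d) => Hk.
    by rewrite /zh /= Hk (ltnW Hk) /=; exact: H2.
  case: (eqVneq k.+1 d) => [E|E].
    subst d; rewrite zh_big // /zh /= leqnn; exact: H3.
  have Hdk : (d < k.+1)%N by rewrite ltn_neqAle eq_sym E Hk.
  by rewrite (zh_big r s Hdk) (@zh_big _ _ r s k.+2 (ltnW Hdk)).
move=> H; split; last split.
- by have := H 0%N; rewrite /zh /= d0.
- move=> k Hk; have := H k.+1; by rewrite /zh /= Hk (ltnW Hk).
- have := H d; rewrite zh_big // /zh leqnn.
  by case: eqP => [E|_] //; rewrite E in d0.
Qed.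

Fixpoint chain (R : realType) n (sp : 'I_n -> nat -> R) (prev : 'I_n -> nat)
  (pi : seq 'I_n) (b : R) : Prop :=
  match pi with
  | [::] => True
  | i :: pi' =>
      let next := fun k => (prev k + (k == i))%N in
      0 <= sp i (next i) <= b /\ chain sp next pi' (sp i (next i))
  end.

Lemma chain_ge (R : realType) n (Psi Theta : ('I_n -> nat) -> R) (r : R)
  (sp : 'I_n -> nat -> R) :
  (forall j, r * Theta j <= Psi j) ->
  forall pi prev b, 0 <= b -> chain sp prev pi b ->
  r * (b * Theta prev + stair_sum Theta sp prev pi) <=
  b * Psi prev + stair_sum Psi sp prev pi.
Proof.
move=> H; elim=> [|i pi IH] prev b b0 /=.
  by move=> _; rewrite !addr0 mulrCA ler_wpM2l.
set next := fun k => _.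
move=> [/andP [a0 ab] C].
have := IH next _ a0 C.
set a := sp i (next i).
have h1 : (b - a) * (r * Theta prev) <= (b - a) * Psi prev.
  by rewrite ler_wpM2l ?subr_ge0.
move: h1; set X := stair_sum Theta _ _ _; set Y := stair_sum Psi _ _ _.
move=> h1 h2.
have E1 : r * (b * Theta prev + ((Theta next - Theta prev) * a + X)) =
  (b - a) * (r * Theta prev) + r * (a * Theta next + X) by ring.
have E2 : b * Psi prev + ((Psi next - Psi prev) * a + Y) =
  (b - a) * Psi prev + (a * Psi next + Y) by ring.
by rewrite E1 E2; apply: lerD.
Qed.

Lemma greedy (R : realType) n (d : 'I_n -> nat) (sp : 'I_n -> nat -> R) :
  (forall i k, (0 < k)%N -> 0 <= sp i k) ->
  (forall i k, (0 < k)%N -> sp i k.+1 <= sp i k) ->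
  forall m prev b, (\sum_i (d i - prev i))%N = m ->
  (forall i, (prev i < d i)%N -> sp i (prev i).+1 <= b) ->
  exists pi, (forall i, count_mem i pi = d i - prev i)%N /\ chain sp prev pi b.
Proof.
move=> Hpos Hmon; elim=> [|m IH] prev b Hs Hb.
  exists [::]; split => // i /=.
  have : (d i - prev i <= \sum_i (d i - prev i))%N.
    by rewrite (bigD1 i) //= leq_addr.
  by rewrite Hs leqn0 => /eqP ->.
have [i0 Hi0] : exists i0, (prev i0 < d i0)%N.
  apply/existsP; apply: contraT => /existsPn H.
  move: Hs; rewrite big1 // => i _.
  by apply/eqP; rewrite subn_eq0 leqNgt; apply: H.
pose P := fun i => (prev i < d i)%N.
have [im Pim Hmax] := @arg_maxP _ R _ i0 P (fun i => sp i (prev i).+1) Hi0.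
pose prev' := fun k => (prev k + (k == im))%N.
have Hs' : (\sum_i (d i - prev' i))%N = m.
  have Hs2 : (d im - prev im + \sum_(i < n | i != im) (d i - prev i))%N = m.+1.
    by rewrite -Hs [in RHS](bigD1 im).
  rewrite (bigD1 im) //=.
  rewrite /prev' eqxx addn1 (eq_bigr (fun i => d i - prev i)%N).
    by move: Pim Hs2; rewrite /P; move: (\sum_(i < n | i != im) _)%N => S; lia.
  by move=> i /negbTE ->; rewrite addn0.
have Hb' : forall k, (prev' k < d k)%N -> sp k (prev' k).+1 <= sp im (prev im).+1.
  move=> k; rewrite /prev'; case: (eqVneq k im) => [->|nk].
    by rewrite addn1 => _; apply: Hmon.
  by rewrite addn0 => Hk; apply: Hmax.
have [pi [Hc Hch]] := IH prev' (sp im (prev im).+1) Hs' Hb'.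
exists (im :: pi); split.
  move=> k /=; rewrite Hc /prev' eq_sym; case: (eqVneq k im) => [->|_].
    by move: Pim; rewrite /P; lia.
  by rewrite addn0.
rewrite /= eqxx addn1; split; last by [].
by rewrite Hpos //= Hb.
Qed.

Lemma stair_sum_opp (R : realType) n (F : ('I_n -> nat) -> R) sp pi prev :
  stair_sum (fun j => - F j) sp prev pi = - stair_sum F sp prev pi.
Proof.
elim: pi prev => [|i pi IH] prev /=; first by rewrite oppr0.
by rewrite IH; ring.
Qed.

Lemma stair_upper (R : realType) n (d : 'I_n -> nat) (F : ('I_n -> nat) -> R)
  (kstar : 'I_n -> nat) (rho : R) (sp : 'I_n -> nat -> R) :
  (forall x y, (forall i, x i <= d i)%N -> (forall i, y i <= d i)%N ->
    F (fun i => maxn (x i) (y i)) + F (fun i => minn (x i) (y i)) <= F x + F y) ->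
  (forall i, kstar i <= d i)%N -> 0 <= rho ->
  (forall i k, (0 < k)%N -> sp i k = if (k <= kstar i)%N then rho else 0) ->
  forall pi prev, (forall i, prev i + count_mem i pi = d i)%N ->
  rho * F (fun i => minn (prev i) (kstar i)) + stair_sum F sp prev pi
    <= rho * F kstar.
Proof.
move=> Fsub Hk r0 Hsp; elim=> [|i pi IH] prev Hc.
  have -> : (fun i => minn (prev i) (kstar i)) = kstar.
    apply: funext => k; have := Hc k; have := Hk k; rewrite addn0; lia.
  by rewrite /= addr0.
rewrite /=.
set next := (fun k => (prev k + (k == i))%N).
have Hc' : forall k, (next k + count_mem k pi)%N = d k.
  by move=> k; rewrite /next -(Hc k) /= eq_sym addnA.
have IH' := IH next Hc'.
have Hpi : (prev i < d i)%N by have := Hc i; rewrite /= eqxx; lia.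
have Hpd : forall k, (prev k <= d k)%N by move=> k; have := Hc k; lia.
rewrite Hsp /next ?eqxx ?addn1 //.
case: (ltnP (prev i) (kstar i)) => Hik.
  have S := Fsub prev (fun k => minn (next k) (kstar k)) Hpd.
  have S' : F next + F (fun k => minn (prev k) (kstar k)) <=
     F prev + F (fun k => minn (next k) (kstar k)).
    have E1 : (fun i0 => maxn (prev i0) (minn (next i0) (kstar i0))) = next.
      apply: funext => k; rewrite /next; case: (eqVneq k i) => [->|_]; lia.
    have E2 : (fun i0 => minn (prev i0) (minn (next i0) (kstar i0))) =
              (fun k => minn (prev k) (kstar k)).
      apply: funext => k; rewrite /next; case: (eqVneq k i) => [->|_]; lia.
    have Hb : forall k, (minn (next k) (kstar k) <= d k)%N by move=> k; have := Hk k; lia.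
    by have := S Hb; rewrite E1 E2.
  move: IH'; rewrite /next => IH'.
  have S2 := ler_wpM2l r0 S'.
  move: S2 IH'; rewrite /next.
  set a := F _; set b := F _; set c := F _; set e := F _; set S0 := stair_sum _ _ _ _.
  move=> S2 IH'. rewrite /= in S2 IH' *.
  lra.
rewrite mulr0 add0r.
have E : (fun k => minn (prev k) (kstar k)) = (fun k => minn (next k) (kstar k)).
  apply: funext => k; rewrite /next; case: (eqVneq k i) => [->|_]; lia.
by rewrite E.
Qed.

Lemma grid_sub (R : realType) n (d : 'I_n -> nat) (h : 'I_n -> nat -> R) (L U : 'I_n -> R)
  (phi : ('I_n -> R) -> R) :
  (forall i k, L i <= h i k <= U i) ->
  (forall i a b, (a <= b)%N -> (b <= d i)%N -> h i a <= h i b) ->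
  forall x y : 'I_n -> nat, (forall i, x i <= d i)%N -> (forall i, y i <= d i)%N ->
  (fun i => h i (maxn (x i) (y i))) = (fun i => Num.max (h i (x i)) (h i (y i))) /\
  (fun i => h i (minn (x i) (y i))) = (fun i => Num.min (h i (x i)) (h i (y i))).
Proof.
move=> Hb Hm x y Hx Hy; split; apply: funext => i /=;
  case: (leqP (x i) (y i)) => H.
- by rewrite max_r // Hm.
- by rewrite max_l // Hm // ltnW.
- by rewrite min_l // Hm.
- by rewrite min_r // Hm // ltnW.
Qed.

Lemma zh0 (R : realType) d k : zh 0 (0 : 'cV[R]_d) k = 0.
Proof.
rewrite /zh /vnat; case: eqP => // _; case: leqP => // _.
by case: insubP => // o _ _; rewrite mxE.
Qed.

Lemma zh_vnat (R : realType) d (r : R) (w : 'cV[R]_d) k : (0 < k)%N -> zh r w k = vnat w k.-1.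
Proof.
move=> k0; rewrite /zh; case: eqP => [E|_]; first by rewrite E in k0.
case: leqP => // H; rewrite vnat_out //.
by rewrite -ltnS prednK.
Qed.

Unset Implicit Arguments.

Theorem theorem4 (R : realType) (n : nat) (d : 'I_n -> nat)
  (p : forall i : 'I_n, 'I_(d i).+1 -> R)
  (L U L' U' : 'I_n -> R) (f g : 'I_n -> R -> R)
  (phi vphi : ('I_n -> R) -> R)
  (sigma : forall i : 'I_n, {perm 'I_(d i).+1})
  (A : forall i : 'I_n, 'M[R]_(d i)) (c : forall i : 'I_n, 'cV[R]_(d i)) :
  (0 < n)%N ->
  (forall i, 0 < d i)%N ->
  (forall i (j k : 'I_(d i).+1), (j < k)%N -> p i j < p i k) ->
  (forall i (j : 'I_(d i).+1), L i <= f i (p i j) <= U i) ->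
  (forall i (j : 'I_(d i).+1), L' i <= g i (p i j) <= U' i) ->
  submodular_on L U phi ->
  supermodular_on L' U' vphi ->
  (forall x, in_X p x -> 0 <= phi (fun i => f i (x i))) ->
  (forall x, in_X p x -> 0 < vphi (fun i => g i (x i))) ->
  (forall i (j k : 'I_(d i).+1), (j <= k)%N ->
     f i (p i (sigma i j)) <= f i (p i (sigma i k)) /\
     g i (p i (sigma i j)) <= g i (p i (sigma i k))) ->
  (* (L^{sigma_i})^{-1}(z) = A_i z + c_i *)
  (forall i (z : 'cV[R]_(d i)), Lmap (sigma i) (A i *m z + c i) = z) ->
  forall xs : 'I_n -> R, in_X p xs ->
  (forall x, in_X p x ->
     phi (fun i => f i (xs i)) / vphi (fun i => g i (xs i))
       <= phi (fun i => f i (x i)) / vphi (fun i => g i (x i))) ->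
  lp_optimal_value d (grid_val p sigma f phi) (grid_val p sigma g vphi) A c
    (phi (fun i => f i (xs i)) / vphi (fun i => g i (xs i))).
Proof.
move=> n0 d0 _ fbox gbox phisub vphisup phipos vphipos sigmon Ainv xs Hxs Hmin.
set Psi := grid_val p sigma f phi.
set Theta := grid_val p sigma g vphi.
set r := phi _ / vphi _.
have inX : forall j : 'I_n -> nat, in_X p (fun i => p i (sigma i (inord (j i)))).
  by move=> j i; exists (sigma i (inord (j i))).
have Tpos : forall j, 0 < Theta j by move=> j; exact: (vphipos _ (inX j)).
have rle : forall j, r * Theta j <= Psi j.
  by move=> j; rewrite -ler_pdivlMr //; exact: (Hmin _ (inX j)).
have r0 : 0 <= r by rewrite divr_ge0 ?phipos ?ltW ?vphipos.
split; last first.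
move=> mu rho s.
rewrite /lp_feasible.
move=> [Hst Hs0 Hsm Hsd].
have hs : forall i, hsimp rho (s i).
  by move=> i; apply/lp_hsimp => //; split; [exact: Hs0 | split; [exact: Hsm | exact: Hsd]].
have rho0 : 0 <= rho.
  by have [+ _] := hsimp_bounds (hs (Ordinal n0)) 0%N.
set sp := fun i k => vnat (sprime A c rho s i) k.-1.
have hs' : forall i, hsimp rho (sprime A c rho s i).
  move=> i; rewrite /sprime.
  case: (eqVneq rho 0) => [E|rn0].
    have -> : s i = 0.
      apply/matrixP => m z; rewrite (ord1 z) mxE.
      have [B1 B2] := hsimp_bounds (hs i) m.+1.
      move: B1 B2; rewrite zh_vnat //= (vnatE _ (ltn_ord m)) E.
      have -> : Ordinal (ltn_ord m) = m by apply: val_inj.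
      by move=> B1 B2; apply/eqP; rewrite eq_le B1 B2.
    by rewrite E mulmx0 scale0r addr0 => k; rewrite !zh0.
  have rpos : 0 < rho by rewrite lt_def rn0 rho0.
  set u := rho^-1 *: s i.
  set w := rho^-1 *: (A i *m s i + rho *: c i).
  have Ew : A i *m u + c i = w.
    by rewrite /u /w -scalemxAr scalerDr scalerA mulVf // scale1r.
  have hu : hsimp 1 u.
    have ip : 0 < rho^-1 by rewrite invr_gt0.
    by have := hsimpZ ip (hs i); rewrite mulVf.
  have hw : hsimp 1 w.
    apply/simp_hsimp; apply/(Lmap_simp (sigma i)).
    by rewrite -Ew Ainv; apply/simp_hsimp.
  have := hsimpZ rpos hw.
  by rewrite /w scalerA divff // scale1r mulr1.
have spE : forall i k, (0 < k)%N -> sp i k = zh rho (sprime A c rho s i) k.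
  by move=> i k k0; rewrite zh_vnat.
have [pi [Hc Hch]] : exists pi, (forall i, count_mem i pi = d i - 0)%N /\
    chain sp (fun _ => 0%N) pi rho.
  apply: (@greedy R n d sp _ _ _ (fun _ => 0%N) rho erefl).
  - by move=> i k k0; rewrite spE //; have [] := hsimp_bounds (hs' i) k.
  - by move=> i k k0; rewrite !spE //; exact: hs'.
  - move=> i _; rewrite spE //.
    by have := hs' i 0%N.
have Hpi : is_staircase d pi by move=> i; rewrite Hc subn0.
have [H1 H2] := Hst pi Hpi.
have := chain_ge rle rho0 Hch.
rewrite /stair_val in H1 H2.
move: H1 H2; set a := Psi _; set b := Theta _; set X := stair_sum Psi _ _ _;
  set Y := stair_sum Theta _ _ _ => H1 H2 H3.
nra.
pose ks i : 'I_(d i).+1 := odflt ord0 [pick k | xs i == p i (sigma i k)].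
have ksE : forall i, xs i = p i (sigma i (ks i)).
  move=> i; rewrite /ks; case: pickP => [k /eqP //|H].
  have [j Hj] := Hxs i.
  by have := H ((sigma i)^-1 j)%g; rewrite permKV Hj eqxx.
pose kstar i := (ks i : nat).
have kd : forall i, (kstar i <= d i)%N by move=> i; rewrite -ltnS ltn_ord.
have Xs : (fun i => p i (sigma i (inord (kstar i)))) = xs.
  by apply: funext => i; rewrite /kstar inord_val ksE.
have PsiK : Psi kstar = phi (fun i => f i (xs i)) by rewrite /Psi /grid_val -Xs.
have ThK : Theta kstar = vphi (fun i => g i (xs i)) by rewrite /Theta /grid_val -Xs.
set rho := (Theta kstar)^-1.
have rpos : 0 < rho by rewrite invr_gt0.
pose w i : 'cV[R]_(d i) := \col_(m < d i) (if (m.+1 <= kstar i)%N then 1 else 0).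
have zw : forall i k, zh 1 (w i) k = if (k <= kstar i)%N then 1 else 0.
  move=> i [|k] //.
  case: (ltnP k (d i)) => Hk.
    by rewrite zh_vnat // (vnatE _ Hk) mxE.
  rewrite zh_big //; case: leqP => // H.
  by have := leq_trans H (kd i); rewrite ltnNge Hk.
have hw : forall i, hsimp 1 (w i).
  move=> i k; rewrite !zw; case: ifP => H1; case: ifP => H2 //; try lra.
  by rewrite (ltnW H1) in H2.
pose s i := rho *: Lmap (sigma i) (w i).
have hs : forall i, hsimp rho (s i).
  move=> i; rewrite -[rho]mulr1; apply: hsimpZ => //.
  by apply/simp_hsimp; apply/Lmap_simp; apply/simp_hsimp.
have s'E : forall i, sprime A c rho s i = rho *: w i.
  move=> i; rewrite /sprime /s -scalemxAr -scalerDr.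
  congr (_ *: _); apply: (@Lmap_inj _ _ (sigma i)); by rewrite Ainv.
have spE : forall i k, (0 < k)%N ->
    vnat (sprime A c rho s i) k.-1 = if (k <= kstar i)%N then rho else 0.
  move=> i k k0; rewrite s'E vnatZ -(zh_vnat 1) // zw.
  by case: ifP; rewrite ?mulr1 ?mulr0.
have fmon : forall i a b, (a <= b)%N -> (b <= d i)%N ->
    f i (p i (sigma i (inord a))) <= f i (p i (sigma i (inord b))).
  move=> i a b ab bd; apply: (sigmon i _ _ _).1.
  by rewrite !inordK // ltnS // (leq_trans ab bd).
have gmon : forall i a b, (a <= b)%N -> (b <= d i)%N ->
    g i (p i (sigma i (inord a))) <= g i (p i (sigma i (inord b))).
  move=> i a b ab bd; apply: (sigmon i _ _ _).2.
  by rewrite !inordK // ltnS // (leq_trans ab bd).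
exists rho, s; split.
- move=> pi Hpi.
  have Hc : forall i, (0 + count_mem i pi)%N = d i by move=> i; rewrite add0n Hpi.
  have Z : (fun i => minn 0 (kstar i)) = (fun _ => 0%N) by apply: funext => i; rewrite min0n.
  split.
    have Fsub : forall x y : 'I_n -> nat, (forall i, x i <= d i)%N -> (forall i, y i <= d i)%N ->
        Psi (fun i => maxn (x i) (y i)) + Psi (fun i => minn (x i) (y i)) <= Psi x + Psi y.
      move=> x y Hx Hy.
      have [E1 E2] := @grid_sub R n d (fun i k => f i (p i (sigma i (inord k)))) L U phi
        (fun i k => fbox i _) fmon x y Hx Hy.
      rewrite /Psi /grid_val E1 E2; apply: phisub => i; exact: fbox.
    have := @stair_upper R n d Psi kstar rho _ Fsub kd (ltW rpos) spE pi (fun _ => 0%N) Hc.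
    rewrite Z /stair_val => H; rewrite mulrC; apply: (le_trans H).
    by rewrite PsiK /r /rho ThK mulrC.
  have Fsub : forall x y : 'I_n -> nat, (forall i, x i <= d i)%N -> (forall i, y i <= d i)%N ->
      - Theta (fun i => maxn (x i) (y i)) + - Theta (fun i => minn (x i) (y i)) <= - Theta x + - Theta y.
    move=> x y Hx Hy.
    have [E1 E2] := @grid_sub R n d (fun i k => g i (p i (sigma i (inord k)))) L' U' vphi
      (fun i k => gbox i _) gmon x y Hx Hy.
    rewrite /Theta /grid_val E1 E2 -!opprD lerN2; apply: vphisup => i; exact: gbox.
  have := @stair_upper R n d (fun j => - Theta j) kstar rho _ Fsub kd (ltW rpos) spE pi (fun _ => 0%N) Hc.
  have rT : rho * Theta kstar = 1 by rewrite /rho mulVf // gt_eqF.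
  rewrite Z stair_sum_opp /stair_val !mulrN rT.
  move=> H; move: H; set a := Theta _; set X := stair_sum _ _ _ _ => H.
  rewrite mulrC; lra.
- by move=> i; have := (proj2 (lp_hsimp _ _ (d0 i)) (hs i)) => -[].
- by move=> i; have := (proj2 (lp_hsimp _ _ (d0 i)) (hs i)) => -[_ []].
- by move=> i; have := (proj2 (lp_hsimp _ _ (d0 i)) (hs i)) => -[_ []].
Qed.
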